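(* Let $X,Y\subseteq\mathbb{Q}$ be such that $X\setminus Y$ and $Y\setminus X$ are finite. Then $X$ is a base if and only if $Y$ is a base.
   Context: For $X\subseteq\mathbb{Q}$ and a positive integer $N$, write $X_N:=\{x_1+\cdots+x_N : x_1,\dots,x_N\in X\}$. $X$ is called a base if $X_N=\mathbb{Q}$ for some $N\ge 1$. *)

(* Defs.v *)
From HB Require Import structures.
From mathcomp Require Import all_boot all_order all_algebra.
Set Implicit Arguments. Unset Strict Implicit. Unset Printing Implicit Defensive.
Import Order.TTheory GRing.Theory Num.Theory.
Local Open Scope ring_scope.

Definition ratset := rat -> Prop.

Definition sumset (X : ratset) (N : nat) : ratset :=
  fun q => exists x : 'I_N -> rat, (forall i, X (x i)) /\ q = \sum_(i < N) x i.

Definition is_base (X : ratset) : Prop :=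
  exists N : nat, (1 <= N)%N /\ forall q : rat, sumset X N q.

Definition setdiff (X Y : ratset) : ratset := fun q => X q /\ ~ Y q.

Definition finite_set (A : ratset) : Prop :=
  exists s : seq rat, forall q, A q -> q \in s.

(* Main.v *)
Require Import Defs.
From HB Require Import structures.
From mathcomp Require Import all_boot all_order all_algebra.
From mathcomp Require Import zify ring lra.
From Stdlib Require Import Classical.
Set Implicit Arguments. Unset Strict Implicit. Unset Printing Implicit Defensive.
Import Order.TTheory GRing.Theory Num.Theory.
Local Open Scope ring_scope.

Section Sums.
Variable S : ratset.

Lemma sumset0 : sumset S 0 0.
Proof. exists (fun _ => 0); split; [by case | by rewrite big_ord0]. Qed.

Lemma sumset1 s : S s -> sumset S 1 s.
Proof. move=> Hs; exists (fun _ => s); split => //; by rewrite big_ord1. Qed.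

Lemma sumsetD i j u v : sumset S i u -> sumset S j v -> sumset S (i + j) (u + v).
Proof.
move=> [x [Hx ->]] [y [Hy ->]].
exists (fun k => match split k with inl a => x a | inr b => y b end); split.
  by move=> k; case: (split k).
rewrite big_split_ord /=; congr (_ + _); apply: eq_bigr => k _.
  by rewrite (unsplitK (inl k)).
by rewrite (unsplitK (inr k)).
Qed.

Lemma sumset_len n m q : n = m -> sumset S n q -> sumset S m q.
Proof. by move=> ->. Qed.

Lemma sumset_val n q q' : q = q' -> sumset S n q -> sumset S n q'.
Proof. by move=> ->. Qed.

Lemma sumset_iter n i u : sumset S i u -> sumset S (n * i) (n%:R * u).
Proof.
move=> H; elim: n => [|n IH]; first by rewrite mul0n mul0r; exact: sumset0.
have := sumsetD H IH; rewrite -mulSn.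
by rewrite -[in X in _ -> sumset _ _ X]addn1 natrD mulrDl mul1r addrC.
Qed.

Lemma sumset0_eq q : sumset S 0 q -> q = 0.
Proof. by move=> [x [_ ->]]; rewrite big_ord0. Qed.

Lemma sumsetS n r : sumset S n.+1 r -> exists x, S x /\ sumset S n (r - x).
Proof.
move=> [x [Hx ->]]; exists (x ord0); split => //.
rewrite big_ord_recl addrC addKr; exists (fun i => x (lift ord0 i)); split => //.
Qed.

End Sums.

Lemma sumset_mono (X Z : ratset) n q :
  (forall x, X x -> Z x) -> sumset X n q -> sumset Z n q.
Proof. by move=> HXZ [x [Hx ->]]; exists x; split => // i; apply: HXZ. Qed.

Lemma decomp (S : ratset) (a : rat) n r :
  sumset (fun x => S x \/ x = a) n r ->
  exists k, (k <= n)%N /\ sumset S (n - k) (r - k%:R * a).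
Proof.
elim: n r => [|n IH] r H.
  exists 0%N; split => //; rewrite (sumset0_eq H) mul0r subr0; exact: sumset0.
have [x [[Hx|->] Hr]] := sumsetS H.
  have [k [Hk Hs]] := IH _ Hr; exists k; split; first by lia.
  have H1 := sumsetD (sumset1 Hx) Hs.
  have -> : (n.+1 - k = 1 + (n - k))%N by lia.
  apply: sumset_val H1; ring.
have [k [Hk Hs]] := IH _ Hr; exists k.+1; split; first by lia.
have -> : (n.+1 - k.+1 = n - k)%N by lia.
apply: sumset_val Hs; rewrite -addn1 natrD; ring.
Qed.

Lemma remove1 (S : ratset) (a : rat) :
  is_base (fun x => S x \/ x = a) -> is_base S.
Proof.
move=> [N [HN1 HX]].
have H r : exists k, (k <= N)%N /\ sumset S (N - k) (r - k%:R * a).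
  by apply: decomp; apply: HX.
have [k1 [Hk1 HD]] := H (- a).
have Hp : (k1.+1)%:R != 0 :> rat by rewrite pnatr_eq0.
have [k [Hk HU]] := H (a / (k1.+1)%:R + N%:R * a).
have HU1 := sumset_iter k1.+1 HU.
have HD1 := sumset_iter (N - k) HD.
have [alpha Halpha] : exists alpha, sumset S alpha a.
  exists (k1.+1 * (N - k) + (N - k) * (N - k1))%N.
  apply: sumset_val (sumsetD HU1 HD1).
  rewrite natrB // -[k1.+1]addn1 natrD in Hp *.
  field; exact: Hp.
have [L [HL1 HL]] : exists L, (1 <= L)%N /\ sumset S L 0.
  case: (eqVneq a 0) => [a0 | an0].
    have [k2 [Hk2 H2]] := H 1.
    have [k3 [Hk3 H3]] := H (-1).
    exists (N - k2 + (N - k3))%N; split.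
      case E: (N - k2)%N => [|m]; last by lia.
      move: H2; rewrite E => /sumset0_eq; rewrite a0 mulr0 subr0 => /eqP.
      by rewrite oner_eq0.
    apply: sumset_val (sumsetD H2 H3); rewrite a0; ring.
  have HA := sumset_iter k1.+1 Halpha.
  exists (N - k1 + k1.+1 * alpha)%N; split.
    case E: (N - k1)%N => [|m]; last by lia.
    move: HD; rewrite E => /sumset0_eq => HD0.
    have : (k1.+1)%:R * a = 0.
      have -> : (k1.+1)%:R * a = - (- a - k1%:R * a) by rewrite -addn1 natrD; ring.
      by rewrite HD0 oppr0.
    move/eqP; rewrite mulf_eq0 (negbTE an0) orbF => /eqP Hk10.
    by move: Hp; rewrite Hk10 eqxx.
  apply: sumset_val (sumsetD HD HA); rewrite -addn1 natrD; ring.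
have HL0 : L%:R != 0 :> rat by rewrite pnatr_eq0; lia.
exists (L * (N + N * alpha))%N; split.
  by rewrite muln_gt0; apply/andP; split; lia.
move=> q.
have [j [Hj Hq]] := H (q / L%:R).
have HQ1 := sumset_iter L Hq.
have HA := sumset_iter (L * j) Halpha.
have HZ := sumset_iter (j + (N - j) * alpha) HL.
have := sumsetD (sumsetD HQ1 HA) HZ.
have -> : (L * (N - j) + L * j * alpha + (j + (N - j) * alpha) * L
            = L * (N + N * alpha))%N.
  move: (subnK Hj); move: (N - j)%N => m Em; rewrite -Em; ring.
apply: sumset_val; rewrite natrM mulr0 addr0; field; exact: HL0.
Qed.

Lemma base_mono (X Z : ratset) : (forall x, X x -> Z x) -> is_base X -> is_base Z.
Proof.
move=> HXZ [N [HN H]]; exists N; split => // q.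
exact: sumset_mono HXZ (H q).
Qed.

Lemma base_transfer (Y : ratset) (s : seq rat) : forall X : ratset,
  is_base X -> (forall x, X x -> ~ Y x -> x \in s) -> is_base Y.
Proof.
elim: s => [|a s IH] X HX Hs.
  apply: base_mono HX => x Xx; case: (classic (Y x)) => // nY.
  by have := Hs x Xx nY.
pose Z : ratset := fun x => Y x \/ x \in s.
have HZa : is_base (fun x => Z x \/ x = a).
  apply: base_mono HX => x Xx; case: (classic (Y x)) => [Yx|nY].
    by left; left.
  move: (Hs x Xx nY); rewrite in_cons => /orP [/eqP -> | xs].
    by right.
  by left; right.
apply: (IH Z (remove1 HZa)) => x [Yx|xs] nY //.
Qed.

Theorem proposition2p6 (X Y : ratset) :
  finite_set (setdiff X Y) -> finite_set (setdiff Y X) ->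
  (is_base X <-> is_base Y).
Proof.
move=> [s Hs] [t Ht]; split => HB.
  by apply: (base_transfer HB) => x Xx nY; apply: Hs.
by apply: (base_transfer HB) => x Yx nX; apply: Ht.
Qed.
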